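(* Let $A$ be a partial ring. A partial subring $R\subseteq A\times A$ is a congruence on $A$ if and only if its underlying partial monoid is an effective equivalence relation on the underlying partial monoid of $A$.
   Context: A partial monoid is a set $A$ with $0$, a set $A_2\subseteq A\times A$ of summable pairs and $+\colon A_2\to A$, with $0$ a unit summable with everything, commutativity ($(a,b)\in A_2\Rightarrow(b,a)\in A_2$, $a+b=b+a$), and associativity: $(a,b),(a+b,c)\in A_2$ iff $(b,c),(a,b+c)\in A_2$, and then $(a+b)+c=a+(b+c)$. A partial ring is a partial monoid with a commutative associative multiplication with unit $1$ such that $0\cdot a=0$ and $(a_1,a_2)\in A_2\Rightarrow(a_1x,a_2x)\in A_2$, $(a_1+a_2)x=a_1x+a_2x$. Homomorphisms preserve $0$ (and $1$, products for rings), summability and sums. $A\times A$ is the product partial ring (componentwise operations, pairs summable iff componentwise summable). An equivalence relation on a partial monoid (resp. partial ring) $A$ is a partial submonoid (resp. partial subring) $R\subseteq A\times A$ such that for each object $X$ of the category, $\mathrm{Hom}(X,R)$ is an equivalence relation on $\mathrm{Hom}(X,A)$; it is effective if it is the kernel pair of some homomorphism $f\colon A\to B$ in that category, i.e. $R=\{(a,a'):f(a)=f(a')\}$ with summable pairs all pairs of elements of $R$ summable in $A\times A$. A congruence on a partial ring $A$ is an effective equivalence relation on $A$ in the category of partial rings. *)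

(* Defs.v *)
(* The partial addition + : A_2 -> A is modelled by a total function [padd]
   whose values outside the summable pairs [psumm] are irrelevant. *)
Record PMon := {
  car :> Type;
  pzero : car;
  psumm : car -> car -> Prop;
  padd : car -> car -> car;
  pzero_summ : forall a, psumm pzero a;
  pzero_add : forall a, padd pzero a = a;
  psumm_comm : forall a b, psumm a b -> psumm b a;
  padd_comm : forall a b, psumm a b -> padd a b = padd b a;
  psumm_assoc : forall a b c,
    (psumm a b /\ psumm (padd a b) c) <-> (psumm b c /\ psumm a (padd b c));
  padd_assoc : forall a b c, psumm a b -> psumm (padd a b) c ->
    padd (padd a b) c = padd a (padd b c)
}.
Arguments pzero {p}.
Arguments psumm {p}.
Arguments padd {p}.

Record PRing := {
  pm :> PMon;
  pone : pm;
  pmul : pm -> pm -> pm;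
  pmul_comm : forall a b, pmul a b = pmul b a;
  pmul_assoc : forall a b c, pmul (pmul a b) c = pmul a (pmul b c);
  pone_mul : forall a, pmul pone a = a;
  pzero_mul : forall a, pmul pzero a = pzero;
  psumm_mul : forall a1 a2 x, psumm a1 a2 -> psumm (pmul a1 x) (pmul a2 x);
  pmul_addl : forall a1 a2 x, psumm a1 a2 ->
    pmul (padd a1 a2) x = padd (pmul a1 x) (pmul a2 x)
}.
Arguments pone {p}.
Arguments pmul {p}.

Definition is_pmon_hom (A B : PMon) (f : A -> B) : Prop :=
  f pzero = pzero /\
  (forall a b, psumm a b -> psumm (f a) (f b) /\ f (padd a b) = padd (f a) (f b)).

Definition is_pring_hom (A B : PRing) (f : A -> B) : Prop :=
  is_pmon_hom (pm A) (pm B) f /\ f pone = pone /\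
  (forall a b, f (pmul a b) = pmul (f a) (f b)).

Section Prod.
Variable A : PMon.

Definition prod_summ (p q : A * A) : Prop := psumm (fst p) (fst q) /\ psumm (snd p) (snd q).
Definition prod_add (p q : A * A) : A * A := (padd (fst p) (fst q), padd (snd p) (snd q)).

Lemma prod_zero_summ : forall a, prod_summ (pzero, pzero) a.
Proof. intros [a1 a2]; split; apply pzero_summ. Qed.

Lemma prod_zero_add : forall a, prod_add (pzero, pzero) a = a.
Proof. intros [a1 a2]; unfold prod_add; simpl; now rewrite !pzero_add. Qed.

Lemma prod_summ_comm : forall a b, prod_summ a b -> prod_summ b a.
Proof. intros a b [H1 H2]; split; now apply psumm_comm. Qed.

Lemma prod_add_comm : forall a b, prod_summ a b -> prod_add a b = prod_add b a.
Proof. intros a b [H1 H2]; unfold prod_add; now rewrite (padd_comm _ _ _ H1), (padd_comm _ _ _ H2). Qed.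

Lemma prod_summ_assoc : forall a b c,
  (prod_summ a b /\ prod_summ (prod_add a b) c) <->
  (prod_summ b c /\ prod_summ a (prod_add b c)).
Proof.
  intros a b c; unfold prod_summ, prod_add; simpl.
  pose proof (psumm_assoc A (fst a) (fst b) (fst c)) as E1.
  pose proof (psumm_assoc A (snd a) (snd b) (snd c)) as E2.
  tauto.
Qed.

Lemma prod_add_assoc : forall a b c, prod_summ a b -> prod_summ (prod_add a b) c ->
  prod_add (prod_add a b) c = prod_add a (prod_add b c).
Proof.
  intros a b c [H1 H2] [H3 H4]; unfold prod_add in *; simpl in *.
  now rewrite (padd_assoc _ _ _ _ H1 H3), (padd_assoc _ _ _ _ H2 H4).
Qed.

Definition prodPMon : PMon :=
  {| car := (A * A)%type; pzero := (pzero, pzero); psumm := prod_summ; padd := prod_add;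
     pzero_summ := prod_zero_summ; pzero_add := prod_zero_add;
     psumm_comm := prod_summ_comm; padd_comm := prod_add_comm;
     psumm_assoc := prod_summ_assoc; padd_assoc := prod_add_assoc |}.
End Prod.

Section ProdRing.
Variable A : PRing.

Definition prod_mul (p q : A * A) : A * A := (pmul (fst p) (fst q), pmul (snd p) (snd q)).

Lemma prod_mul_comm : forall a b : prodPMon A, prod_mul a b = prod_mul b a.
Proof. intros a b; unfold prod_mul; now rewrite (pmul_comm A (fst a)), (pmul_comm A (snd a)). Qed.

Lemma prod_mul_assoc : forall a b c : prodPMon A,
  prod_mul (prod_mul a b) c = prod_mul a (prod_mul b c).
Proof. intros a b c; unfold prod_mul; simpl; now rewrite !pmul_assoc. Qed.

Lemma prod_one_mul : forall a : prodPMon A, prod_mul (pone, pone) a = a.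
Proof. intros [a1 a2]; unfold prod_mul; simpl; now rewrite !pone_mul. Qed.

Lemma prod_zero_mul : forall a : prodPMon A, prod_mul (@pzero (prodPMon A)) a = @pzero (prodPMon A).
Proof. intros [a1 a2]; unfold prod_mul; simpl; now rewrite !pzero_mul. Qed.

Lemma prod_summ_mul : forall a1 a2 x : prodPMon A,
  @psumm (prodPMon A) a1 a2 -> @psumm (prodPMon A) (prod_mul a1 x) (prod_mul a2 x).
Proof. intros a1 a2 x [H1 H2]; split; simpl; now apply psumm_mul. Qed.

Lemma prod_mul_addl : forall a1 a2 x : prodPMon A, @psumm (prodPMon A) a1 a2 ->
  prod_mul (@padd (prodPMon A) a1 a2) x = @padd (prodPMon A) (prod_mul a1 x) (prod_mul a2 x).
Proof.
  intros a1 a2 x [H1 H2]; simpl; unfold prod_mul, prod_add; simpl.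
  now rewrite (pmul_addl _ _ _ _ H1), (pmul_addl _ _ _ _ H2).
Qed.

Definition prodPRing : PRing :=
  {| pm := prodPMon A; pone := (pone, pone); pmul := prod_mul;
     pmul_comm := prod_mul_comm; pmul_assoc := prod_mul_assoc;
     pone_mul := prod_one_mul; pzero_mul := prod_zero_mul;
     psumm_mul := prod_summ_mul; pmul_addl := prod_mul_addl |}.
End ProdRing.

Record PSubMon (M : PMon) := {
  sp : M -> Prop;
  ss : M -> M -> Prop;
  ss_sp : forall a b, ss a b -> sp a /\ sp b;
  ss_summ : forall a b, ss a b -> psumm a b;
  sp_zero : sp pzero;
  sp_add : forall a b, ss a b -> sp (padd a b);
  ss_zero : forall a, sp a -> ss pzero a;
  ss_comm : forall a b, ss a b -> ss b a;
  ss_assoc : forall a b c, sp a -> sp b -> sp c ->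
    ((ss a b /\ ss (padd a b) c) <-> (ss b c /\ ss a (padd b c)))
}.
Arguments sp {M}.
Arguments ss {M}.

Record PSubRing (A : PRing) := {
  psm :> PSubMon (pm A);
  sp_one : sp psm pone;
  sp_mul : forall a b, sp psm a -> sp psm b -> sp psm (pmul a b);
  ss_mul : forall a1 a2 x, ss psm a1 a2 -> sp psm x -> ss psm (pmul a1 x) (pmul a2 x)
}.
Arguments psm {A}.

(* For homs f g : X -> A, (f,g) lies in Hom(X,R) iff x |-> (f x, g x) factors
   through R as a homomorphism X -> R (R's operations being restrictions). *)
Definition hom_pair_in (X A : PMon) (R : PSubMon (prodPMon A)) (f g : X -> A) : Prop :=
  (forall x, sp R (f x, g x)) /\
  (forall x y, psumm x y -> ss R (f x, g x) (f y, g y)).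

Definition is_equiv_rel_PMon (A : PMon) (R : PSubMon (prodPMon A)) : Prop :=
  forall X : PMon,
    (forall f : X -> A, is_pmon_hom X A f -> hom_pair_in X A R f f) /\
    (forall f g : X -> A, is_pmon_hom X A f -> is_pmon_hom X A g ->
       hom_pair_in X A R f g -> hom_pair_in X A R g f) /\
    (forall f g h : X -> A, is_pmon_hom X A f -> is_pmon_hom X A g -> is_pmon_hom X A h ->
       hom_pair_in X A R f g -> hom_pair_in X A R g h -> hom_pair_in X A R f h).

Definition is_equiv_rel_PRing (A : PRing) (R : PSubRing (prodPRing A)) : Prop :=
  forall X : PRing,
    (forall f : X -> A, is_pring_hom X A f -> hom_pair_in X A R f f) /\
    (forall f g : X -> A, is_pring_hom X A f -> is_pring_hom X A g ->
       hom_pair_in X A R f g -> hom_pair_in X A R g f) /\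
    (forall f g h : X -> A, is_pring_hom X A f -> is_pring_hom X A g -> is_pring_hom X A h ->
       hom_pair_in X A R f g -> hom_pair_in X A R g h -> hom_pair_in X A R f h).

Definition is_kernel_pair_of (A B : PMon) (f : A -> B) (R : PSubMon (prodPMon A)) : Prop :=
  (forall p : A * A, sp R p <-> f (fst p) = f (snd p)) /\
  (forall p q : A * A, sp R p -> sp R q ->
     (ss R p q <-> @psumm (prodPMon A) p q)).

Definition is_effective_PMon (A : PMon) (R : PSubMon (prodPMon A)) : Prop :=
  is_equiv_rel_PMon A R /\
  exists (B : PMon) (f : A -> B), is_pmon_hom A B f /\ is_kernel_pair_of A B f R.

Definition is_congruence (A : PRing) (R : PSubRing (prodPRing A)) : Prop :=
  is_equiv_rel_PRing A R /\
  exists (B : PRing) (f : A -> B), is_pring_hom A B f /\ is_kernel_pair_of A B f R.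

(* Main.v *)
Require Import Defs.
From Stdlib Require Import List Permutation ClassicalEpsilon ProofIrrelevance
  FunctionalExtensionality PropExtensionality.
Import ListNotations.

Inductive RC (B : PMon) : list B -> B -> Prop :=
| RC_nil : RC B [] pzero
| RC_cons : forall x l s, RC B l s -> psumm x s -> RC B (x :: l) (padd x s).

Lemma padd_zero_r (B : PMon) (x : B) : psumm x pzero /\ padd x pzero = x.
Proof.
  assert (H : psumm x pzero) by (apply psumm_comm, pzero_summ).
  split; [exact H|]. rewrite (padd_comm _ _ _ H). apply pzero_add.
Qed.

Lemma RC_fun (B : PMon) l s s' : RC B l s -> RC B l s' -> s = s'.
Proof.
  intros H; revert s'; induction H; intros s' H'; inversion H'; subst; auto.
  f_equal; auto.
Qed.

Lemma RC_nil_iff (B : PMon) s : RC B [] s <-> s = pzero.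
Proof. split; intros H; [inversion H; auto | subst; constructor]. Qed.

Lemma RC_single (B : PMon) (x s : B) : RC B [x] s <-> s = x.
Proof.
  destruct (padd_zero_r B x) as [H1 H2].
  split; intros H.
  - inversion H as [|x' l' s' Hl Hs]; subst. inversion Hl; subst. auto.
  - subst. rewrite <- H2 at 2. constructor; auto. constructor.
Qed.

Lemma RC_app (B : PMon) l1 l2 s1 s2 : RC B l1 s1 -> RC B l2 s2 -> psumm s1 s2 ->
  RC B (l1 ++ l2) (padd s1 s2).
Proof.
  intros H; revert s2; induction H; intros s2 H2 Hs; simpl.
  - rewrite pzero_add. auto.
  - destruct (proj1 (psumm_assoc B x s s2) (conj H0 Hs)) as [Ha Hb].
    rewrite (padd_assoc _ _ _ _ H0 Hs). constructor; auto.
Qed.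

Lemma RC_app_inv (B : PMon) l1 l2 s : RC B (l1 ++ l2) s ->
  exists s1 s2, RC B l1 s1 /\ RC B l2 s2 /\ psumm s1 s2 /\ s = padd s1 s2.
Proof.
  revert s; induction l1 as [|x l1 IH]; intros s H; simpl in *.
  - exists pzero, s. repeat split; auto. constructor. apply pzero_summ.
    now rewrite pzero_add.
  - inversion H as [|x' l' s' Hl Hs]; subst. destruct (IH _ Hl) as (s1 & s2 & Ha & Hb & Hc & Hd). subst.
    destruct (proj2 (psumm_assoc B x s1 s2) (conj Hc Hs)) as [He Hf].
    exists (padd x s1), s2. repeat split; auto. constructor; auto.
    symmetry; apply padd_assoc; auto.
Qed.

Lemma RC_app_iff (B : PMon) l1 l2 s : RC B (l1 ++ l2) s <->
  exists s1 s2, RC B l1 s1 /\ RC B l2 s2 /\ psumm s1 s2 /\ s = padd s1 s2.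
Proof.
  split; [apply RC_app_inv|]. intros (s1 & s2 & Ha & Hb & Hc & Hd); subst.
  apply RC_app; auto.
Qed.

Lemma RC_perm (B : PMon) l l' s : Permutation l l' -> RC B l s -> RC B l' s.
Proof.
  intros HP; revert s; induction HP; intros s0 H; auto.
  - inversion H; subst. constructor; auto.
  - inversion H as [|y' l1 s1 Hl1 Hs1]; subst.
    inversion Hl1 as [|x' l2 t Hl2 Hs2]; subst.
    destruct (proj2 (psumm_assoc B y x t) (conj Hs2 Hs1)) as [Ha Hb].
    assert (Hc : psumm x y) by (apply psumm_comm; auto).
    assert (Hd : padd x y = padd y x) by (apply padd_comm; auto).
    assert (He : psumm (padd x y) t) by (rewrite Hd; auto).
    destruct (proj1 (psumm_assoc B x y t) (conj Hc He)) as [Hf Hg].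
    assert (E : padd x (padd y t) = padd y (padd x t)).
    { rewrite <- (padd_assoc _ _ _ _ Hc He). rewrite Hd.
      apply padd_assoc; auto. }
    rewrite <- E. constructor; auto. constructor; auto.
Qed.

Lemma RC_pair (B : PMon) (x y s : B) : psumm x y -> (RC B [x; y] s <-> s = padd x y).
Proof.
  intros Hxy. change [x; y] with ([x] ++ [y]). rewrite RC_app_iff. split.
  - intros (s1 & s2 & Ha & Hb & Hc & Hd). apply RC_single in Ha. apply RC_single in Hb.
    subst; auto.
  - intros ->. exists x, y. repeat split; auto; apply RC_single; auto.
Qed.

Definition lmul (A : PRing) (l m : list A) : list A :=
  flat_map (fun b => map (fun a => pmul a b) l) m.

Lemma perm_flat_map_swap {X Y : Type} (g : X -> X -> Y) (l m : list X) :
  Permutation (flat_map (fun b => map (fun a => g a b) l) m)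
              (flat_map (fun a => map (fun b => g a b) m) l).
Proof.
  revert m; induction l as [|a l IH]; intros m; simpl.
  - induction m; simpl; auto.
  - eapply perm_trans; [|apply Permutation_app_head, IH].
    clear IH. induction m as [|b m IHm]; simpl; auto.
    apply Permutation_cons; auto.
    eapply perm_trans; [apply Permutation_app_head, IHm|].
    rewrite !app_assoc. apply Permutation_app_tail.
    apply Permutation_app_comm.
Qed.

Lemma lmul_comm_perm (A : PRing) (l m : list A) : Permutation (lmul A l m) (lmul A m l).
Proof.
  unfold lmul.
  replace (flat_map (fun b => map (fun a => pmul a b) m) l) with
      (flat_map (fun a => map (fun b => pmul a b) m) l).
  - apply perm_flat_map_swap.
  - apply flat_map_ext; intros a; apply map_ext; intros b; apply pmul_comm.
Qed.

Lemma lmul_app_r (A : PRing) (l m n : list A) : lmul A l (m ++ n) = lmul A l m ++ lmul A l n.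
Proof. unfold lmul. apply flat_map_app. Qed.

Lemma lmul_assoc (A : PRing) (l m n : list A) :
  lmul A (lmul A l m) n = lmul A l (lmul A m n).
Proof.
  induction n as [|c n IH]; simpl; auto.
  rewrite lmul_app_r, <- IH. f_equal.
  unfold lmul. rewrite flat_map_concat_map, concat_map, map_map.
  rewrite flat_map_concat_map, map_map. f_equal. apply map_ext; intros b.
  rewrite map_map. apply map_ext; intros a. apply pmul_assoc.
Qed.

Lemma lmul_one (A : PRing) (l : list A) : lmul A [pone] l = l.
Proof. induction l; simpl; auto. rewrite pone_mul. f_equal; auto. Qed.

Lemma lmul_nil (A : PRing) (l : list A) : lmul A [] l = [].
Proof. induction l; simpl; auto. Qed.

Section Quot.
Variable A : PRing.
Variable B : PMon.
Variable k : A -> B.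
Hypothesis Hk : is_pmon_hom A B k.
Hypothesis Hm : forall a a' y : A, k a = k a' -> k (pmul a y) = k (pmul a' y).

Definition Mng (l : list A) : A -> B -> Prop :=
  fun y t => RC B (map (fun a => k (pmul a y)) l) t.

Lemma Mng_app_iff l m y t : Mng (l ++ m) y t <->
  exists s1 s2, Mng l y s1 /\ Mng m y s2 /\ psumm s1 s2 /\ t = padd s1 s2.
Proof. unfold Mng. rewrite map_app. apply RC_app_iff. Qed.

Lemma Mng_app l l' m m' : Mng l = Mng l' -> Mng m = Mng m' -> Mng (l ++ m) = Mng (l' ++ m').
Proof.
  intros E1 E2. extensionality y; extensionality t. apply propositional_extensionality.
  rewrite !Mng_app_iff, E1, E2. tauto.
Qed.

Lemma Mng_perm l l' : Permutation l l' -> Mng l = Mng l'.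
Proof.
  intros HP. extensionality y; extensionality t. apply propositional_extensionality.
  unfold Mng. split; apply RC_perm; apply Permutation_map; auto. symmetry; auto.
Qed.

Lemma Mng_mapmul l b y : Mng (map (fun a => pmul a b) l) y = Mng l (pmul b y).
Proof.
  unfold Mng. rewrite map_map.
  replace (map (fun x : A => k (pmul (pmul x b) y)) l) with
    (map (fun a : A => k (pmul a (pmul b y))) l); auto.
  apply map_ext; intros a. now rewrite pmul_assoc.
Qed.

Lemma Mng_lmul_l l l' m : Mng l = Mng l' -> Mng (lmul A l m) = Mng (lmul A l' m).
Proof.
  intros E. induction m as [|b m IH]; simpl; auto.
  apply Mng_app; auto.
  extensionality y. rewrite !Mng_mapmul, E. auto.
Qed.

Lemma Mng_lmul l l' m m' : Mng l = Mng l' -> Mng m = Mng m' ->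
  Mng (lmul A l m) = Mng (lmul A l' m').
Proof.
  intros E1 E2. rewrite (Mng_lmul_l _ _ _ E1).
  rewrite (Mng_perm _ _ (lmul_comm_perm A l' m)), (Mng_perm _ _ (lmul_comm_perm A l' m')).
  apply Mng_lmul_l; auto.
Qed.

Lemma Mng_single a y t : Mng [a] y t <-> t = k (pmul a y).
Proof. unfold Mng; simpl. apply RC_single. Qed.

Definition Q := {F : A -> B -> Prop | exists l, F = Mng l}.

Definition mk (l : list A) : Q := exist _ (Mng l) (ex_intro _ l eq_refl).

Definition rep (q : Q) : list A := proj1_sig (constructive_indefinite_description _ (proj2_sig q)).

Lemma rep_spec q : proj1_sig q = Mng (rep q).
Proof. unfold rep. destruct (constructive_indefinite_description _ _); auto. Qed.

Lemma mk_rep q : mk (rep q) = q.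
Proof.
  destruct q as [F HF]. unfold mk. apply eq_sig_hprop.
  - intros; apply proof_irrelevance.
  - simpl. rewrite <- (rep_spec (exist _ F HF)). auto.
Qed.

Lemma mk_eq l l' : Mng l = Mng l' -> mk l = mk l'.
Proof.
  intros E. unfold mk. apply eq_sig_hprop; [intros; apply proof_irrelevance|]. auto.
Qed.

Lemma mk_eq_inv l l' : mk l = mk l' -> Mng l = Mng l'.
Proof. intros E. apply (f_equal (@proj1_sig _ _)) in E. auto. Qed.

Lemma Mng_rep_mk l : Mng (rep (mk l)) = Mng l.
Proof. rewrite <- rep_spec. auto. Qed.

Definition qzero : Q := mk [].
Definition qone : Q := mk [pone].
Definition qadd (q r : Q) : Q := mk (rep q ++ rep r).
Definition qmul (q r : Q) : Q := mk (lmul A (rep q) (rep r)).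

Lemma qadd_mk l m : qadd (mk l) (mk m) = mk (l ++ m).
Proof. unfold qadd. apply mk_eq, Mng_app; apply Mng_rep_mk. Qed.

Lemma qmul_mk l m : qmul (mk l) (mk m) = mk (lmul A l m).
Proof. unfold qmul. apply mk_eq, Mng_lmul; apply Mng_rep_mk. Qed.

Lemma q_ind (P : Q -> Prop) : (forall l, P (mk l)) -> forall q, P q.
Proof. intros H q. rewrite <- (mk_rep q). apply H. Qed.

Definition qsumm (q r : Q) : Prop := True.

Lemma q_zero_summ : forall a, qsumm qzero a.
Proof. unfold qsumm; auto. Qed.
Lemma q_zero_add : forall a, qadd qzero a = a.
Proof. refine (q_ind _ _); intros l; cbv beta. unfold qzero. rewrite qadd_mk. auto. Qed.
Lemma q_summ_comm : forall a b, qsumm a b -> qsumm b a.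
Proof. unfold qsumm; auto. Qed.
Lemma q_add_comm : forall a b, qsumm a b -> qadd a b = qadd b a.
Proof.
  intros a b _. revert a b. refine (q_ind _ _); intros l; cbv beta. refine (q_ind _ _); intros m; cbv beta.
  rewrite !qadd_mk. apply mk_eq, Mng_perm, Permutation_app_comm.
Qed.
Lemma q_summ_assoc : forall a b c,
    (qsumm a b /\ qsumm (qadd a b) c) <-> (qsumm b c /\ qsumm a (qadd b c)).
Proof. unfold qsumm; tauto. Qed.
Lemma q_add_assoc : forall a b c, qsumm a b -> qsumm (qadd a b) c ->
    qadd (qadd a b) c = qadd a (qadd b c).
Proof.
  intros a b c _ _. revert a b c. refine (q_ind _ _); intros l; cbv beta. refine (q_ind _ _); intros m; cbv beta.
  refine (q_ind _ _); intros n; cbv beta. rewrite !qadd_mk. rewrite app_assoc. auto.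
Qed.

Definition QMon : PMon :=
  {| car := Q; pzero := qzero; psumm := qsumm; padd := qadd;
     pzero_summ := q_zero_summ; pzero_add := q_zero_add;
     psumm_comm := q_summ_comm; padd_comm := q_add_comm;
     psumm_assoc := q_summ_assoc; padd_assoc := q_add_assoc |}.

Lemma q_mul_comm : forall a b : QMon, qmul a b = qmul b a.
Proof.
  refine (q_ind _ _); intros l; cbv beta. refine (q_ind _ _); intros m; cbv beta. rewrite !qmul_mk.
  apply mk_eq, Mng_perm, lmul_comm_perm.
Qed.
Lemma q_mul_assoc : forall a b c : QMon, qmul (qmul a b) c = qmul a (qmul b c).
Proof.
  refine (q_ind _ _); intros l; cbv beta. refine (q_ind _ _); intros m; cbv beta. refine (q_ind _ _); intros n; cbv beta.
  rewrite !qmul_mk. now rewrite lmul_assoc.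
Qed.
Lemma q_one_mul : forall a : QMon, qmul qone a = a.
Proof. refine (q_ind _ _); intros l; cbv beta. unfold qone. rewrite qmul_mk, lmul_one. auto. Qed.
Lemma q_zero_mul : forall a : QMon, qmul (@pzero QMon) a = @pzero QMon.
Proof. refine (q_ind _ _); intros l; cbv beta. simpl. unfold qzero. rewrite qmul_mk, lmul_nil. auto. Qed.
Lemma q_summ_mul : forall a1 a2 x : QMon, @psumm QMon a1 a2 ->
    @psumm QMon (qmul a1 x) (qmul a2 x).
Proof. simpl; unfold qsumm; auto. Qed.
Lemma q_mul_addl : forall a1 a2 x : QMon, @psumm QMon a1 a2 ->
    qmul (@padd QMon a1 a2) x = @padd QMon (qmul a1 x) (qmul a2 x).
Proof.
  intros a1 a2 x _. revert a1 a2 x. simpl.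
  refine (q_ind _ _); intros l; cbv beta. refine (q_ind _ _); intros m; cbv beta. refine (q_ind _ _); intros n; cbv beta.
  rewrite !qadd_mk, !qmul_mk, qadd_mk. apply mk_eq.
  rewrite (Mng_perm _ _ (lmul_comm_perm A (l ++ m) n)), lmul_app_r.
  apply Mng_app; apply Mng_perm, lmul_comm_perm.
Qed.

Definition QRing : PRing :=
  {| pm := QMon; pone := qone; pmul := qmul;
     pmul_comm := q_mul_comm; pmul_assoc := q_mul_assoc;
     pone_mul := q_one_mul; pzero_mul := q_zero_mul;
     psumm_mul := q_summ_mul; pmul_addl := q_mul_addl |}.

Definition qf (a : A) : QRing := mk [a].

Lemma qf_hom : is_pring_hom A QRing qf.
Proof.
  destruct Hk as [Hk0 Hks].
  split; [split|split].
  - simpl. unfold qf, qzero. apply mk_eq.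
    extensionality y; extensionality t; apply propositional_extensionality.
    rewrite Mng_single. unfold Mng; simpl. rewrite RC_nil_iff, pzero_mul, Hk0. tauto.
  - intros a b Hab. split; [simpl; unfold qsumm; auto|].
    simpl. unfold qf. rewrite qadd_mk. apply mk_eq.
    extensionality y; extensionality t; apply propositional_extensionality.
    rewrite Mng_single. unfold Mng; simpl.
    assert (Hs : psumm (pmul a y) (pmul b y)) by (apply psumm_mul; auto).
    destruct (Hks _ _ Hs) as [Hs' Heq].
    rewrite (RC_pair _ _ _ _ Hs'), (pmul_addl _ _ _ _ Hab), Heq. tauto.
  - reflexivity.
  - intros a b. simpl. unfold qf. rewrite qmul_mk. reflexivity.
Qed.

Lemma qf_ker a a' : qf a = qf a' <-> k a = k a'.
Proof.
  split.
  - intros E. apply mk_eq_inv in E.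
    assert (H : Mng [a] pone (k (pmul a pone))) by (apply Mng_single; auto).
    rewrite E in H. apply Mng_single in H.
    rewrite !(pmul_comm A _ pone), !pone_mul in H. auto.
  - intros E. apply mk_eq.
    extensionality y; extensionality t; apply propositional_extensionality.
    rewrite !Mng_single, (Hm _ _ y E). tauto.
Qed.

End Quot.

Lemma kp_hom_pair (X A B : PMon) (k : A -> B) (R : PSubMon (prodPMon A))
  (HK : is_kernel_pair_of A B k R) (f g : X -> A) :
  is_pmon_hom X A f -> is_pmon_hom X A g ->
  (hom_pair_in X A R f g <-> forall x, k (f x) = k (g x)).
Proof.
  destruct HK as [H1 H2]. intros [_ Hf] [_ Hg]. split.
  - intros [Hs _] x. apply (H1 (f x, g x)), Hs.
  - intros E. split.
    + intros x. apply (H1 (f x, g x)), E.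
    + intros x y Hxy.
      assert (Sx : sp R (f x, g x)) by (apply (H1 (f x, g x)), E).
      assert (Sy : sp R (f y, g y)) by (apply (H1 (f y, g y)), E).
      apply (proj2 (H2 _ _ Sx Sy)).
      split; simpl; [apply (Hf _ _ Hxy) | apply (Hg _ _ Hxy)].
Qed.

Lemma kp_equiv (X A B : PMon) (k : A -> B) (R : PSubMon (prodPMon A))
  (HK : is_kernel_pair_of A B k R) :
    (forall f : X -> A, is_pmon_hom X A f -> hom_pair_in X A R f f) /\
    (forall f g : X -> A, is_pmon_hom X A f -> is_pmon_hom X A g ->
       hom_pair_in X A R f g -> hom_pair_in X A R g f) /\
    (forall f g h : X -> A, is_pmon_hom X A f -> is_pmon_hom X A g -> is_pmon_hom X A h ->
       hom_pair_in X A R f g -> hom_pair_in X A R g h -> hom_pair_in X A R f h).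
Proof.
  split; [|split].
  - intros f Hf. apply (kp_hom_pair X A B k R HK f f Hf Hf). intros x. reflexivity.
  - intros f g Hf Hg H. pose proof (proj1 (kp_hom_pair X A B k R HK f g Hf Hg) H) as E.
    apply (kp_hom_pair X A B k R HK g f Hg Hf). intros x. symmetry. apply E.
  - intros f g h Hf Hg Hh H1 H2.
    pose proof (proj1 (kp_hom_pair X A B k R HK f g Hf Hg) H1) as E1.
    pose proof (proj1 (kp_hom_pair X A B k R HK g h Hg Hh) H2) as E2.
    apply (kp_hom_pair X A B k R HK f h Hf Hh). intros x. rewrite E1; apply E2.
Qed.

Theorem mainTheorem7 (A : PRing) (R : PSubRing (prodPRing A)) :
  is_congruence A R <-> is_effective_PMon (pm A) (psm R).
Proof.
  split.
  - intros [_ (B & f & Hf & HK)]. split.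
    + intros X. apply (kp_equiv X _ _ _ _ HK).
    + exists (pm B), f. split; [apply Hf | exact HK].
  - intros [_ (B & k & Hk & HK)].
    assert (Hm : forall a a' y : A, k a = k a' -> k (pmul a y) = k (pmul a' y)).
    { intros a a' y E. destruct HK as [H1 _].
      assert (Ha : sp (psm R) (a, a')) by (apply (H1 (a, a')); auto).
      assert (Hy : sp (psm R) (y, y)) by (apply (H1 (y, y)); auto).
      pose proof (sp_mul _ R (a, a') (y, y) Ha Hy) as Hp.
      apply (H1 (pmul a y, pmul a' y)) in Hp. exact Hp. }
    split.
    + intros X. destruct (kp_equiv X _ _ _ _ HK) as (E1 & E2 & E3).
      split; [|split].
      * intros f [Hf _]. auto.
      * intros f g [Hf _] [Hg _]. auto.
      * intros f g h [Hf _] [Hg _] [Hh _]. eauto.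
    + exists (QRing A B k), (qf A B k). split.
      * apply qf_hom; auto.
      * destruct HK as [H1 H2]. split; auto.
        intros p. rewrite H1. symmetry. apply qf_ker; auto.
Qed.
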